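(* Let $n\in[0,\frac72]$, $\varepsilon>0$ and $h_\varepsilon(s):=\frac{s^{5-n}}{s^{4-n}+\varepsilon}$ for $s\ge0$. Then $$0\le h_\varepsilon(s)\le s\quad\text{and}\quad0\le h_\varepsilon'(s)\le5-n\qquad\text{for all }s\ge0,$$ and moreover $$|h_\varepsilon''(s)|\le2^{-\frac{7-2n}{2(4-n)}}(4-n)(5-n)\,\varepsilon^{\frac{1}{2(4-n)}}s^{-3/2}\qquad\text{for all }s>0.$$ *)

(* Defs.v *)
From Stdlib Require Import Reals.
From Coquelicot Require Import Coquelicot.
Open Scope R_scope.

(* Real power s^a for s >= 0, with the convention 0^a = 0 (used only for
   a > 0 here).  For s < 0 the value is irrelevant (set to 0). *)
Definition rpow (s a : R) : R := if Rle_dec s 0 then 0 else Rpower s a.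

Definition h_eps (n eps : R) (s : R) : R :=
  rpow s (5 - n) / (rpow s (4 - n) + eps).

(* Main.v *)
Require Import Defs.
From Stdlib Require Import Reals Lra Psatz.
From Coquelicot Require Import Coquelicot.
Open Scope R_scope.

Lemma exp_le_mono x y : x <= y -> exp x <= exp y.
Proof. intros [H|H]; [left; apply exp_increasing; auto | subst; lra]. Qed.

Definition D1 m eps x :=
  (exp (m * ln x) ^ 2 + (m + 1) * eps * exp (m * ln x)) / (exp (m * ln x) + eps) ^ 2.
Definition D2 m eps x :=
  m * eps * exp (m * ln x) / x * ((1 - m) * exp (m * ln x) + (m + 1) * eps)
   / (exp (m * ln x) + eps) ^ 3.

Lemma F_deriv m eps x : 0 < x -> 0 < eps ->
  is_derive (fun x => x * exp (m * ln x) / (exp (m * ln x) + eps)) x (D1 m eps x).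
Proof.
  intros Hx He. pose proof (exp_pos (m * ln x)) as HE.
  auto_derive. { repeat split; lra. }
  unfold D1. field; split; lra.
Qed.

Lemma D1_deriv m eps x : 0 < x -> 0 < eps ->
  is_derive (D1 m eps) x (D2 m eps x).
Proof.
  intros Hx He. pose proof (exp_pos (m * ln x)) as HE.
  unfold D1. auto_derive. { repeat split; try lra. simpl. apply Rmult_integral_contrapositive; split; lra. }
  unfold D2. field; split; lra.
Qed.

Lemma h_eq n eps x : 0 < x ->
  h_eps n eps x = x * exp ((4 - n) * ln x) / (exp ((4 - n) * ln x) + eps).
Proof.
  intros Hx. unfold h_eps, rpow.
  destruct (Rle_dec x 0); [lra|]. unfold Rpower.
  replace ((5 - n) * ln x) with (ln x + (4 - n) * ln x) by ring.
  rewrite exp_plus, exp_ln; auto.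
Qed.

Lemma loc_pos s : 0 < s -> locally s (fun y => 0 < y).
Proof. intros Hs. apply (open_gt 0 s Hs). Qed.
Lemma D2_bound m eps s : 1/2 <= m -> 0 < eps -> 0 < s ->
 Rabs (D2 m eps s) <= Rpower 2 (-((2*m-1)/(2*m))) * m * (m+1)
     * Rpower eps (1/(2*m)) * Rpower s (-(3/2)).
Proof.
  intros Hm He Hs.
  pose proof (exp_pos (m * ln s)) as HE.
  set (E := exp (m * ln s)) in *.
  assert (H1 : Rabs (D2 m eps s) <= m * (m+1) * (eps * E / (s * (E + eps)^2))).
  { unfold D2. fold E.
    replace (m * eps * E / s * ((1 - m) * E + (m + 1) * eps) / (E + eps) ^ 3)
      with ((m * eps * E / (s * (E+eps)^3)) * ((1 - m) * E + (m + 1) * eps))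
      by (field; split; lra).
    assert (Hf : 0 <= m * eps * E / (s * (E+eps)^3)).
    { apply Rle_mult_inv_pos. { apply Rmult_le_pos; [apply Rmult_le_pos|]; lra. }
      apply Rmult_lt_0_compat; [lra| apply pow_lt; lra]. }
    rewrite Rabs_mult, (Rabs_pos_eq _ Hf).
    apply Rle_trans with ((m * eps * E / (s * (E+eps)^3)) * ((m+1) * (E + eps))).
    { apply Rmult_le_compat_l; auto. apply Rabs_le; split; nra. }
    right. field. split; lra. }
  eapply Rle_trans; [exact H1|].
  set (L := ln s). set (lep := ln eps). set (Z := ln (E + eps)).
  set (a := 1 / (2 * m)).
  assert (Ha : a * m = 1/2) by (unfold a; field; lra).
  assert (Ha0 : 0 < a) by (unfold a; apply Rdiv_lt_0_compat; lra).
  assert (Ha1 : a <= 1).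
  { unfold a. apply Rmult_le_reg_r with (2*m); [lra|]. field_simplify; lra. }
  assert (Hln2 : 0 < ln 2).
  { rewrite <- ln_1. apply ln_increasing; lra. }
  assert (HEs : exp L = s) by (apply exp_ln; auto).
  assert (HEe : exp lep = eps) by (apply exp_ln; auto).
  assert (HEZ : exp Z = E + eps) by (apply exp_ln; lra).
  assert (HEm : exp (m * L) = E) by reflexivity.
  assert (Hp : lep + m * L - 2 * Z <= - 2 * ln 2).
  { destruct (Rle_or_lt (lep + m * L - 2 * Z) (- 2 * ln 2)) as [h|h]; auto.
    exfalso. apply exp_increasing in h.
    replace (lep + m * L - 2 * Z) with (lep + m * L + - (Z + Z)) in h by ring.
    replace (- 2 * ln 2) with (- (ln 2 + ln 2)) in h by ring.
    repeat (rewrite exp_plus in h || rewrite exp_Ropp in h). rewrite HEe, HEm, HEZ, exp_ln in h by lra.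
    assert (h2 : / (E + eps) ^ 2 * (E - eps) ^ 2 * / 4 >= 0).
    { apply Rle_ge. apply Rmult_le_pos; [apply Rmult_le_pos|]; try lra.
      - left. apply Rinv_0_lt_compat, pow_lt; lra.
      - apply pow2_ge_0. }
    assert (h3 : / (2 * 2) - eps * E * / ((E + eps) * (E + eps)) =
                 / (E + eps) ^ 2 * (E - eps) ^ 2 * / 4) by (field; lra).
    lra. }
  assert (Hq : m * L - Z <= 0).
  { destruct (Rle_or_lt (m * L - Z) 0) as [h|h]; auto.
    exfalso. apply exp_increasing in h.
    replace (m * L - Z) with (m * L + - Z) in h by ring.
    rewrite exp_plus, exp_Ropp, HEm, HEZ, exp_0 in h.
    assert (h2 : E * / (E + eps) < 1).
    { apply Rmult_lt_reg_r with (E + eps); [lra|].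
      rewrite Rmult_assoc, Rinv_l by lra. lra. }
    lra. }
  assert (HL : eps * E / (s * (E + eps) ^ 2) = exp (lep + m * L + - L + - (Z + Z))).
  { repeat (rewrite exp_plus || rewrite exp_Ropp). rewrite HEe, HEm, HEs, HEZ. field. split; lra. }
  assert (Hineq : lep + m * L + - L + - (Z + Z) <=
      (-((2*m-1)/(2*m))) * ln 2 + a * lep + (-(3/2)) * L).
  { replace (-((2*m-1)/(2*m))) with (a - 1) by (unfold a; field; lra).
    assert (e1 : lep + m * L + - L + - (Z + Z) =
      (1 - a) * (lep + m * L - 2 * Z) + 2 * a * (m * L - Z) + a * lep - 3/2 * L).
    { replace (2 * a * (m * L - Z)) with (2 * (a * m) * L - 2 * a * Z) by ring.
      replace ((1 - a) * (lep + m * L - 2 * Z)) with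
        (lep + m * L - 2 * Z - a * lep - (a * m) * L + 2 * a * Z) by ring.
      rewrite Ha. field. }
    rewrite e1. nra. }
  rewrite HL.
  unfold Rpower.
  apply Rle_trans with (m * (m + 1) * exp ((-((2*m-1)/(2*m))) * ln 2 + a * lep + (-(3/2)) * L)).
  { apply Rmult_le_compat_l; [nra|]. apply exp_le_mono. exact Hineq. }
  right. rewrite !exp_plus. unfold a, lep, L. ring.
Qed.
Lemma h_zero n eps : h_eps n eps 0 = 0.
Proof. unfold h_eps, rpow. destruct (Rle_dec 0 0); [|lra]. unfold Rdiv. ring. Qed.

Lemma lim0 n eps : n <= 7/2 -> 0 < eps ->
  filterlim (fun t => (h_eps n eps t - h_eps n eps 0) / t) (at_right 0) (locally 0).
Proof.
  intros Hn He. apply filterlim_locally. intros e.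
  set (m := 4 - n).
  assert (Hm : 1/2 <= m) by (unfold m; lra).
  pose proof (cond_pos e) as He'.
  assert (Hd : 0 < exp (ln (e * eps) / m)) by apply exp_pos.
  exists (mkposreal _ Hd). intros t Ht Htp.
  change (Rabs (t - 0) < exp (ln (e * eps) / m)) in Ht.
  change (Rabs ((h_eps n eps t - h_eps n eps 0) / t - 0) < e).
  rewrite h_zero, h_eq by exact Htp.
  rewrite Rminus_0_r, Rabs_pos_eq in Ht by lra.
  fold m. pose proof (exp_pos (m * ln t)) as HE.
  assert (HEl : exp (m * ln t) < e * eps).
  { rewrite <- (exp_ln (e * eps)) by (apply Rmult_lt_0_compat; lra).
    apply exp_increasing.
    apply ln_increasing in Ht; [|exact Htp]. rewrite ln_exp in Ht.
    apply Rmult_lt_reg_r with (/ m); [apply Rinv_0_lt_compat; lra|].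
    replace (m * ln t * / m) with (ln t) by (field; lra).
    exact Ht. }
  replace ((t * exp (m * ln t) / (exp (m * ln t) + eps) - 0) / t - 0)
    with (exp (m * ln t) / (exp (m * ln t) + eps)) by (field; split; lra).
  rewrite Rabs_pos_eq.
  2: { apply Rle_mult_inv_pos; lra. }
  apply Rle_lt_trans with (exp (m * ln t) / eps).
  { unfold Rdiv. apply Rmult_le_compat_l; [lra|].
    apply Rinv_le_contravar; lra. }
  apply Rmult_lt_reg_r with eps; [lra|].
  unfold Rdiv. rewrite Rmult_assoc, Rinv_l by lra. lra.
Qed.

Theorem lemma6p1 (n eps : R) (hn0 : 0 <= n) (hn1 : n <= 7 / 2) (heps : 0 < eps) :
  (forall s : R, 0 <= s -> 0 <= h_eps n eps s /\ h_eps n eps s <= s)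
  /\
  (* at the endpoint s = 0: the (right) derivative exists and lies in [0, 5-n] *)
  (exists d : R,
      filterlim (fun t => (h_eps n eps t - h_eps n eps 0) / t) (at_right 0) (locally d)
      /\ 0 <= d /\ d <= 5 - n)
  /\
  (forall s : R, 0 < s ->
      ex_derive (h_eps n eps) s /\
      0 <= Derive (h_eps n eps) s /\ Derive (h_eps n eps) s <= 5 - n)
  /\
  (forall s : R, 0 < s ->
      ex_derive_n (h_eps n eps) 2 s /\
      Rabs (Derive_n (h_eps n eps) 2 s) <=
        Rpower 2 (- ((7 - 2 * n) / (2 * (4 - n)))) * (4 - n) * (5 - n)
        * Rpower eps (1 / (2 * (4 - n))) * Rpower s (- (3 / 2))).
Proof.
  assert (Hd1 : forall x, 0 < x -> is_derive (h_eps n eps) x (D1 (4-n) eps x)).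
  { intros x Hx.
    apply is_derive_ext_loc with (fun x => x * exp ((4-n) * ln x) / (exp ((4-n) * ln x) + eps)).
    - apply filter_imp with (fun y => 0 < y); [intros y Hy; symmetry; apply h_eq; auto|].
      apply loc_pos; auto.
    - apply F_deriv; auto. }
  split.
  { intros s [Hs|Hs].
    - rewrite h_eq by exact Hs. pose proof (exp_pos ((4 - n) * ln s)) as HE.
      split.
      + apply Rle_mult_inv_pos; [apply Rmult_le_pos|]; lra.
      + apply Rmult_le_reg_r with (exp ((4 - n) * ln s) + eps); [lra|].
        unfold Rdiv. rewrite Rmult_assoc, Rinv_l by lra. nra.
    - subst. rewrite h_zero. lra. }
  split.
  { exists 0. split; [apply lim0; lra | lra]. }
  split.
  { intros s Hs. split; [eexists; apply Hd1; auto|].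
    rewrite (is_derive_unique _ _ _ (Hd1 s Hs)). unfold D1.
    pose proof (exp_pos ((4 - n) * ln s)) as HE.
    set (E := exp ((4 - n) * ln s)) in *.
    split.
    - apply Rle_mult_inv_pos; [|apply pow_lt; lra].
      assert (0 <= E ^ 2) by apply pow2_ge_0.
      assert (0 <= (4 - n + 1) * eps * E) by (apply Rmult_le_pos; [apply Rmult_le_pos|]; lra).
      lra.
    - apply Rmult_le_reg_r with ((E + eps) ^ 2); [apply pow_lt; lra|].
      unfold Rdiv. rewrite Rmult_assoc, Rinv_l by (apply pow_nonzero; lra).
      simpl. assert (0 <= (4 - n) * (E * E)) by (apply Rmult_le_pos; nra). assert (0 <= (5 - n) * (eps * E)) by (apply Rmult_le_pos; nra). assert (0 <= (5 - n) * (eps * eps)) by (apply Rmult_le_pos; nra). nra. }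
  intros s Hs.
  assert (Hloc : locally s (fun y => D1 (4-n) eps y = Derive_n (h_eps n eps) 1 y)).
  { apply filter_imp with (fun y => 0 < y); [|apply loc_pos; auto].
    intros y Hy. simpl. symmetry. apply is_derive_unique. apply Hd1; auto. }
  split.
  { simpl. apply ex_derive_ext_loc with (D1 (4-n) eps); [exact Hloc|].
    eexists; apply D1_deriv; auto. }
  change (Rabs (Derive (Derive_n (h_eps n eps) 1) s) <=
        Rpower 2 (- ((7 - 2 * n) / (2 * (4 - n)))) * (4 - n) * (5 - n)
        * Rpower eps (1 / (2 * (4 - n))) * Rpower s (- (3 / 2))).
  rewrite <- (Derive_ext_loc _ _ _ Hloc).
  rewrite (is_derive_unique _ _ _ (D1_deriv (4 - n) eps s Hs heps)).
  replace (7 - 2 * n) with (2 * (4 - n) - 1) by ring.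
  replace (5 - n) with ((4 - n) + 1) by ring.
  apply D2_bound; lra.
Qed.
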